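(* Let $\mathcal{X}$ be a finite-dimensional real Hilbert space with norm $\|\cdot\|$. Let $\mathbb{P}_{\mathrm{true}}$ be a probability distribution on $\mathcal{X}$ whose support $\mathcal{M}=\mathrm{supp}(\mathbb{P}_{\mathrm{true}})$ is a convex, compact set. Let $\{\mathbb{P}^k\}_{k\in\mathbb{N}}$ be probability distributions on $\mathcal{X}$ such that, for all $k\in\mathbb{N}$, $(P_{\mathcal{M}})_\#\mathbb{P}^k=\mathbb{P}_{\mathrm{true}}$ (up to a set of measure zero). Let $\Gamma$ be the set of nonnegative $1$-Lipschitz functions $f:\mathcal{X}\to\mathbb{R}$. Then for all $k\in\mathbb{N}$, $\tau\in[0,\infty)$ and $p\in[1,\infty)$, the distance function $d_{\mathcal{M}}$ is a solution to $$\min_{f\in\Gamma}\; \mathbb{E}_{u\sim\mathbb{P}_{\mathrm{true}}}\big[f(u)+\tau f(u)^p\big]-\mathbb{E}_{u^k\sim\mathbb{P}^k}\big[f(u^k)\big].$$ Moreover, when $\tau>0$, the restriction of each minimizer $f^\star$ of this problem to the support of $\mathbb{P}^k$ is unique, i.e. $f^\star(u^k)=d_{\mathcal{M}}(u^k)$ for all $u^k\in\mathrm{supp}(\mathbb{P}^k)$.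
   Context: For a convex compact set $\mathcal{M}\subset\mathcal{X}$, $P_{\mathcal{M}}(u)=\arg\min_{v\in\mathcal{M}}\|v-u\|$ is the metric projection and $d_{\mathcal{M}}(u)=\inf_{v\in\mathcal{M}}\|v-u\|=\|P_{\mathcal{M}}(u)-u\|$ is the pointwise distance function. For a map $T$ and a probability measure $\mathbb{Q}$, $T_\#\mathbb{Q}$ denotes the push-forward measure, $T_\#\mathbb{Q}[U]=\mathbb{Q}[T^{-1}(U)]$. *)

(* Defs.v *)
From HB Require Import structures.
From mathcomp Require Import all_boot all_order all_algebra.
From mathcomp Require Import all_classical all_reals all_analysis.
Set Implicit Arguments. Unset Strict Implicit. Unset Printing Implicit Defensive.
Import Order.TTheory GRing.Theory Num.Theory.
Import numFieldNormedType.Exports.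
Local Open Scope classical_set_scope.
Local Open Scope ring_scope.

(* The finite-dimensional real Hilbert space X is modelled as R^n = 'rV[R]_n
   with the Euclidean norm (every n-dim real Hilbert space is isometric to it). *)
Definition enorm (R : realType) (n : nat) (x : 'rV[R]_n) : R :=
  Num.sqrt (\sum_(i < n) x 0 i ^+ 2).

Definition borelX (R : realType) (n : nat) :=
  g_sigma_algebraType (@open 'rV[R]_n).

(* Support of a measure: points all of whose open neighbourhoods have
   positive measure (= smallest closed set of full measure). *)
Definition supp (R : realType) (n : nat) (P : set (borelX R n) -> \bar R)
  : set 'rV[R]_n :=
  [set x | forall U : set 'rV[R]_n, open U -> U x -> (0 < P U)%E].

Definition projM (R : realType) (n : nat) (M : set 'rV[R]_n) (u : 'rV[R]_n)
  : 'rV[R]_n :=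
  xget 0 [set v | M v /\ forall w, M w -> enorm (v - u) <= enorm (w - u)].

Definition distM (R : realType) (n : nat) (M : set 'rV[R]_n) (u : 'rV[R]_n) : R :=
  inf [set enorm (v - u) | v in M].

Definition Gamma (R : realType) (n : nat) (f : 'rV[R]_n -> R) : Prop :=
  (forall x, 0 <= f x) /\ (forall x y, `|f x - f y| <= enorm (x - y)).

Definition objective (R : realType) (n : nat)
  (Ptrue Pk : {measure set (borelX R n) -> \bar R}) (tau p : R)
  (f : 'rV[R]_n -> R) : \bar R :=
  (\int[Ptrue]_x (f x + tau * f x `^ p)%:E - \int[Pk]_x (f x)%:E)%E.

(* Main.v *)
Require Import Defs.
From HB Require Import structures.
From mathcomp Require Import all_boot all_order all_algebra.
From mathcomp Require Import all_classical all_reals all_analysis.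
From mathcomp Require Import ring lra measurable_realfun.
Import Order.TTheory GRing.Theory Num.Theory.
Import numFieldNormedType.Exports.
Local Open Scope classical_set_scope.
Local Open Scope ring_scope.

Definition dot {R : realType} {n : nat} (x y : 'rV[R]_n) : R :=
  \sum_(i < n) x 0 i * y 0 i.

Lemma dotC {R : realType} {n : nat} (x y : 'rV[R]_n) : dot x y = dot y x.
Proof. by apply: eq_bigr => i _; rewrite mulrC. Qed.

Lemma dotDl {R : realType} {n : nat} (x y z : 'rV[R]_n) :
  dot (x + y) z = dot x z + dot y z.
Proof. by rewrite /dot -big_split; apply: eq_bigr => i _; rewrite !mxE mulrDl. Qed.

Lemma dotNl {R : realType} {n : nat} (x z : 'rV[R]_n) :
  dot (- x) z = - dot x z.
Proof. by rewrite /dot -sumrN; apply: eq_bigr => i _; rewrite !mxE mulNr. Qed.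

Lemma dotZl {R : realType} {n : nat} (a : R) (x z : 'rV[R]_n) :
  dot (a *: x) z = a * dot x z.
Proof. by rewrite /dot mulr_sumr; apply: eq_bigr => i _; rewrite !mxE mulrA. Qed.

Lemma dotBl {R : realType} {n : nat} (x y z : 'rV[R]_n) :
  dot (x - y) z = dot x z - dot y z.
Proof. by rewrite dotDl dotNl. Qed.

Lemma dotDr {R : realType} {n : nat} (x y z : 'rV[R]_n) :
  dot z (x + y) = dot z x + dot z y.
Proof. by rewrite dotC dotDl !(dotC z). Qed.

Lemma dotBr {R : realType} {n : nat} (x y z : 'rV[R]_n) :
  dot z (x - y) = dot z x - dot z y.
Proof. by rewrite dotC dotBl !(dotC z). Qed.

Lemma dotZr {R : realType} {n : nat} (a : R) (x z : 'rV[R]_n) :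
  dot z (a *: x) = a * dot z x.
Proof. by rewrite dotC dotZl dotC. Qed.

Lemma dot_ge0 {R : realType} {n : nat} (x : 'rV[R]_n) : 0 <= dot x x.
Proof. by apply: sumr_ge0 => i _; rewrite -expr2 sqr_ge0. Qed.

Lemma enorm_sqr {R : realType} {n : nat} (x : 'rV[R]_n) : enorm x ^+ 2 = dot x x.
Proof. by rewrite /enorm sqr_sqrtr //; apply: sumr_ge0 => i _; rewrite sqr_ge0. Qed.

Lemma enorm_ge0 {R : realType} {n : nat} (x : 'rV[R]_n) : 0 <= enorm x.
Proof. exact: sqrtr_ge0. Qed.

Lemma sqr_le {R : realType} (a b : R) : 0 <= b -> a ^+ 2 <= b ^+ 2 -> a <= b.
Proof. move=> b0 h; rewrite !expr2 in h; nra. Qed.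

Lemma dot0l {R : realType} {n : nat} (x y : 'rV[R]_n) : dot x x = 0 -> dot x y = 0.
Proof.
move=> h.
have hs : \sum_(i < n) x 0 i ^+ 2 = 0.
  by rewrite -[RHS]h /dot; apply: eq_bigr => j _; rewrite expr2.
have hx' : forall i, x 0 i = 0.
  move=> i; apply/eqP; rewrite -sqrf_eq0; apply/eqP.
  exact: (psumr_eq0P (fun i _ => sqr_ge0 (x 0 i)) hs).
by rewrite /dot big1 // => i _; rewrite hx' mul0r.
Qed.

Lemma CS {R : realType} {n : nat} (x y : 'rV[R]_n) : dot x y <= enorm x * enorm y.
Proof.
set p := enorm x; set q := enorm y.
have p0 : 0 <= p by exact: enorm_ge0.
have q0 : 0 <= q by exact: enorm_ge0.
have [p00|pp] := eqVneq p 0.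
  rewrite dot0l ?p00 ?mul0r // -enorm_sqr -/p p00 expr2 mul0r //.
have [q00|qq] := eqVneq q 0.
  rewrite dotC dot0l ?q00 ?mulr0 // -enorm_sqr -/q q00 expr2 mul0r //.
have h := dot_ge0 (q *: x - p *: y).
rewrite !(dotBl, dotBr, dotZl, dotZr) -!enorm_sqr -/p -/q (dotC y x) in h.
have pq : 0 < p * q by rewrite mulr_gt0 // lt0r ?pp ?qq.
nra.
Qed.

Lemma enormD {R : realType} {n : nat} (x y : 'rV[R]_n) :
  enorm (x + y) <= enorm x + enorm y.
Proof.
apply: sqr_le; first by rewrite addr_ge0 // enorm_ge0.
rewrite enorm_sqr !(dotDl, dotDr) (dotC y x) sqrrD -!enorm_sqr.
have := CS x y; lra.
Qed.

Lemma enormN {R : realType} {n : nat} (x : 'rV[R]_n) : enorm (- x) = enorm x.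
Proof. by rewrite /enorm; congr Num.sqrt; apply: eq_bigr => i _; rewrite mxE sqrrN. Qed.

Lemma enormB {R : realType} {n : nat} (x y : 'rV[R]_n) : enorm (x - y) = enorm (y - x).
Proof. by rewrite -enormN opprB. Qed.

Lemma enorm0 {R : realType} {n : nat} : enorm (0 : 'rV[R]_n) = 0.
Proof. by rewrite /enorm big1 ?sqrtr0 // => i _; rewrite mxE expr2 mul0r. Qed.

Lemma coord_le_enorm {R : realType} {n : nat} (x : 'rV[R]_n) i : `|x 0 i| <= enorm x.
Proof.
apply: sqr_le; first exact: enorm_ge0.
rewrite enorm_sqr real_normK ?num_real // /dot (bigD1 i) //= -expr2 lerDl.
by apply: sumr_ge0 => j _; rewrite -expr2 sqr_ge0.
Qed.

Lemma mxnorm_le_enorm {R : realType} {n : nat} (x : 'rV[R]_n) : `|x| <= enorm x.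
Proof.
rewrite [`|x|]mx_normrE; apply: bigmax_le; first exact: enorm_ge0.
by move=> [i j] _ /=; rewrite (ord1 i); exact: coord_le_enorm.
Qed.

Lemma enorm_le_mxnorm {R : realType} {n : nat} (x : 'rV[R]_n) : enorm x <= n%:R * `|x|.
Proof.
apply: sqr_le; first by rewrite mulr_ge0.
rewrite enorm_sqr /dot.
have h : forall i, x 0 i * x 0 i <= `|x| ^+ 2.
  move=> i; rewrite -expr2 -real_normK ?num_real //.
  rewrite lerXn2r ?nnegrE //.
  rewrite [`|x|]mx_normrE; exact: (le_bigmax _ (fun ij => `|x ij.1 ij.2|) (0, i)).
apply: (le_trans (ler_sum _ (fun i _ => h i))).
rewrite sumr_const card_ord exprMn -mulr_natl.
have hn : (n%:R : R) <= n%:R ^+ 2.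
  case: n {x h} => [|m]; first by rewrite expr2 mul0r.
  by rewrite expr2 ler_peMr // ler1n.
have := sqr_ge0 `|x|; nra.
Qed.

Lemma lip_cont_R {R : realType} {n : nat} (f : 'rV[R]_n -> R) :
  (forall x y, `|f x - f y| <= enorm (x - y)) -> continuous f.
Proof.
move=> hf x; apply/(@cvgrPdist_lt _ _ _ (nbhs x) (nbhs_filter x)) => e e0.
have d0 : 0 < e / n.+1%:R by rewrite divr_gt0.
near=> y.
have hxy : `|x - y| < e / n.+1%:R.
  by near: y; have := @near_ball _ 'rV[R]_n x _ d0; rewrite -ball_normE.
apply: (le_lt_trans (hf x y)); apply: (le_lt_trans (enorm_le_mxnorm _)).
apply: (le_lt_trans (y := n.+1%:R * `|x - y|)).
  by rewrite ler_wpM2r // ler_nat.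
by rewrite mulrC -ltr_pdivlMr // ltr0n.
Unshelve. all: by end_near.
Qed.

Lemma lip_cont_V {R : realType} {n : nat} (g : 'rV[R]_n -> 'rV[R]_n) :
  (forall x y, enorm (g x - g y) <= enorm (x - y)) -> continuous g.
Proof.
move=> hf x; apply/(@cvgrPdist_lt _ _ _ (nbhs x) (nbhs_filter x)) => e e0.
have d0 : 0 < e / n.+1%:R by rewrite divr_gt0.
near=> y.
have hxy : `|x - y| < e / n.+1%:R.
  by near: y; have := @near_ball _ 'rV[R]_n x _ d0; rewrite -ball_normE.
apply: (le_lt_trans (mxnorm_le_enorm _)).
apply: (le_lt_trans (hf x y)); apply: (le_lt_trans (enorm_le_mxnorm _)).
apply: (le_lt_trans (y := n.+1%:R * `|x - y|)).
  by rewrite ler_wpM2r // ler_nat.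
by rewrite mulrC -ltr_pdivlMr // ltr0n.
Unshelve. all: by end_near.
Qed.

Lemma cont_meas_R {R : realType} {n : nat} {f : 'rV[R]_n -> R} :
  continuous f -> measurable_fun [set: borelX R n] (f : borelX R n -> R).
Proof.
move=> hf; apply: (@measurability _ _ _ _ setT (f : borelX R n -> R) (@measurable_realfun.RGenOpens.G R)).
  exact: measurable_realfun.RGenOpens.measurableE.
move=> _ [_ [a [b ->]] <-]; rewrite setTI; apply: sub_sigma_algebra.
by apply: (proj1 (continuousP _) hf); exact: interval_open.
Qed.

Lemma cont_meas_E {R : realType} {n : nat} {f : 'rV[R]_n -> R} :
  continuous f -> @measurable_fun _ _ (borelX R n) (\bar R) [set: borelX R n] (EFin \o f).
Proof.
by move=> hf; apply/measurable_EFinP; exact: cont_meas_R.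
Qed.

Lemma cont_meas_V {R : realType} {n : nat} {g : 'rV[R]_n -> 'rV[R]_n} :
  continuous g -> measurable_fun [set: borelX R n] (g : borelX R n -> borelX R n).
Proof.
move=> hf; apply: (@measurability _ _ _ _ setT (g : borelX R n -> borelX R n) (@open 'rV[R]_n)) => //.
move=> _ [B oB <-]; rewrite setTI; apply: sub_sigma_algebra.
exact: (proj1 (continuousP _) hf).
Qed.

Local Open Scope convex_scope.
Ltac vec := apply/rowP => i; rewrite !mxE; lra.

Lemma enorm_lip {R : realType} {n : nat} (a b : 'rV[R]_n) :
  `|enorm a - enorm b| <= enorm (a - b).
Proof.
rewrite ler_norml; apply/andP; split.
  have h : b = (b - a) + a by vec.
  have := enormD (b - a) a; rewrite -h enormB; lra.
have h : a = (a - b) + b by vec.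
have := enormD (a - b) b; rewrite -h; lra.
Qed.

Definition isproj {R : realType} {n : nat} (M : set 'rV[R]_n) (u v : 'rV[R]_n) :=
  M v /\ forall w, M w -> enorm (v - u) <= enorm (w - u).

Lemma proj_ex {R : realType} {n : nat} (M : set 'rV[R]_n) u :
  M !=set0 -> compact M -> exists v, isproj M u v.
Proof.
move=> M0 cM.
have cf : continuous (fun w : 'rV[R]_n => enorm (w - u)).
  apply: lip_cont_R => x y.
  have -> : x - y = (x - u) - (y - u) by vec.
  exact: enorm_lip.
have [c cM' hc] := EVT_min_rV M0 cM (@continuous_subspaceT _ _ M _ cf).
exists c; split; first by move: cM'; rewrite inE.
by move=> w Mw; apply: hc; rewrite inE.
Qed.

Lemma projM_spec {R : realType} {n : nat} {M : set 'rV[R]_n} u :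
  M !=set0 -> compact M -> isproj M u (projM M u).
Proof. by move=> M0 cM; apply: xgetPex; exact: proj_ex. Qed.

Lemma expand_sq {R : realType} {n : nat} (a b : 'rV[R]_n) t :
  dot (a + t *: b) (a + t *: b) = dot a a + 2 * t * dot a b + t ^+ 2 * dot b b.
Proof. rewrite dotDl !dotDr !(dotZl, dotZr) (dotC b a); ring. Qed.

Lemma proj_var {R : realType} {n : nat} {M : set 'rV[R]_n} {u v w} :
  convex_set (M : set (convex_lmodType 'rV[R]_n)) ->
  isproj M u v -> M w -> dot (u - v) (w - v) <= 0.
Proof.
move=> cvx [Mv hv] Mw.
have -> : u - v = - (v - u) by vec.
rewrite dotNl oppr_le0.
set D := dot (v - u) (w - v); set K := dot (w - v) (w - v).
rewrite leNgt; apply/negP => hD.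
have K0 : 0 <= K by exact: dot_ge0.
have KD : 0 < K - D by lra.
set t := - D / (K - D).
have t0 : 0 < t by rewrite /t divr_gt0 // oppr_gt0.
have ht : t * (K - D) = - D by rewrite /t mulfVK // gt_eqF.
have t1 : t <= 1.
  rewrite /t ler_pdivrMr // mul1r; lra.
pose l : {i01 R} := Itv01 (ltW t0) t1.
pose z : 'rV[R]_n := ((w : convex_lmodType 'rV[R]_n) <| l |> (v : convex_lmodType 'rV[R]_n)).
have Mz : M z.
  by have := cvx w v l; rewrite !inE; apply.
have ez : z - u = (v - u) + t *: (w - v).
  change (t *: w + (1 - t) *: v - u = (v - u) + t *: (w - v)); vec.
have := hv _ Mz; rewrite ez => hle.
have hsq : enorm (v - u) ^+ 2 <= enorm (v - u + t *: (w - v)) ^+ 2.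
  by rewrite lerXn2r // ?nnegrE ?enorm_ge0.
rewrite !enorm_sqr expand_sq -/D -/K in hsq.
have h2 : 0 <= t * (2 * D + t * K) by nra.
have h3 : 2 * D + t * K < 0 by nra.
have := pmulr_rge0 (2 * D + t * K) t0; rewrite h2; lra.
Qed.

Lemma proj_lip {R : realType} {n : nat} (M : set 'rV[R]_n) u1 u2 v1 v2 :
  convex_set (M : set (convex_lmodType 'rV[R]_n)) ->
  isproj M u1 v1 -> isproj M u2 v2 -> enorm (v1 - v2) <= enorm (u1 - u2).
Proof.
move=> cvx h1 h2.
have e1 := proj_var (u:=u1) cvx h1 h2.1.
have e2 := proj_var (u:=u2) cvx h2 h1.1.
have ev : v2 - v1 = - (v1 - v2) by vec.
rewrite ev dotC dotNl dotC in e1.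
have hab : dot (v1 - v2) (v1 - v2) <= dot (u1 - u2) (v1 - v2).
  have e : u1 - u2 - (v1 - v2) = (u1 - v1) - (u2 - v2) by vec.
  have : 0 <= dot (u1 - u2 - (v1 - v2)) (v1 - v2) by rewrite e dotBl; lra.
  by rewrite dotBl; lra.
have hcs := CS (u1 - u2) (v1 - v2); rewrite -enorm_sqr in hab.
have a0 := enorm_ge0 (u1 - u2); have b0 := enorm_ge0 (v1 - v2).
rewrite expr2 in hab; nra.
Qed.
Lemma arith1 {R : realType} {A B D F : \bar R} {c : R} :
  (0 <= B)%E -> (B <= c%:E)%E -> (0 <= D)%E -> (0 <= F)%E -> (F <= B + D)%E -> (B <= A)%E ->
  (0 - D <= A - F)%E.
Proof.
case: A => [a||]; case: B => [b||]; case: D => [dd||]; case: F => [ff||] //=;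
  rewrite ?lee_fin ?leey ?leNye //=; lra.
Qed.

Lemma arith2 {R : realType} {A' B D F : \bar R} {c : R} :
  (0 <= B)%E -> (B <= c%:E)%E -> (0 <= D)%E -> (D < +oo)%E -> (0 <= F)%E -> (F <= B + D)%E -> (0 <= A')%E ->
  (B + A' - F <= 0 - D)%E -> A' = 0%E.
Proof.
move=> h1 h2 h3 h4 h5 h6 hA h; apply/eqP; rewrite eq_le hA andbT; move: h1 h2 h3 h4 h5 h6 hA h.
case: A' => [a||]; case: B => [b||]; case: D => [dd||]; case: F => [ff||] //=;
  rewrite ?lee_fin ?leey ?leNye ?ltry //=; lra.
Qed.

Lemma arith3 {R : realType} {A D F : \bar R} :
  (0 <= A)%E -> (0 <= F)%E -> (F <= D)%E -> (D < +oo)%E -> (A - F <= 0 - D)%E -> F = D.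
Proof.
move=> h1 h2 hFD h4 h; apply/eqP; rewrite eq_le hFD /=; move: h1 h2 hFD h4 h.
case: A => [a||]; case: D => [dd||]; case: F => [ff||] //=;
  rewrite ?lee_fin ?leey ?leNye ?ltry //=; lra.
Qed.

Lemma arith4 {R : realType} {G F : \bar R} :
  (0 <= G)%E -> (0 <= F)%E -> (F < +oo)%E -> (G + F = F)%E -> G = 0%E.
Proof.
case: G => [g||]; case: F => [ff||] //=; rewrite ?lee_fin ?ltry //= => ? ? ? [h].
by congr (_%:E); lra.
Qed.

Lemma open_meas {R : realType} {n : nat} (U : set 'rV[R]_n) :
  open U -> measurable (U : set (borelX R n)).
Proof. by move=> oU; apply: sub_sigma_algebra. Qed.

Lemma null_open {R : realType} {n : nat} (mu : {measure set (borelX R n) -> \bar R})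
  (h : borelX R n -> \bar R) (U : set 'rV[R]_n) :
  measurable_fun setT h -> (forall x, 0 <= h x)%E -> (\int[mu]_x h x = 0)%E ->
  open U -> (forall x, U x -> 0 < h x)%E -> mu U = 0%E.
Proof.
move=> mh h0 hi oU hU.
have : ae_eq mu setT h (cst 0%E).
  apply/(ae_eq_integral_abs mu measurableT mh); rewrite -hi.
  by apply: eq_integral => x _; rewrite gee0_abs.
case=> N [mN muN hN].
apply/eqP; rewrite eq_le measure_ge0 andbT -muN; apply: le_measure; rewrite ?inE //.
  exact: open_meas.
move=> x Ux; apply: hN => /= hx; have := hU x Ux; by rewrite hx // ltxx.
Qed.

Lemma transfer {R : realType} {n : nat} (Pt Pk : {measure set (borelX R n) -> \bar R})
  (P : 'rV[R]_n -> 'rV[R]_n) :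
  measurable_fun setT (P : borelX R n -> borelX R n) ->
  (forall A : set (borelX R n), measurable A -> pushforward Pk (P : borelX R n -> borelX R n) A = Pt A) ->
  forall g : borelX R n -> \bar R, measurable_fun setT g -> (forall x, 0 <= g x)%E ->
  (\int[Pt]_x g x = \int[Pk]_x g (P x))%E.
Proof.
move=> mP hp g mg g0.
rewrite (eq_measure_integral (pushforward Pk (P : borelX R n -> borelX R n))); last first.
  by move=> A mA _; rewrite -hp. 
rewrite ge0_integral_pushforward //.
Qed.

Lemma distM_eq {R : realType} {n : nat} {M : set 'rV[R]_n} u :
  M !=set0 -> compact M -> distM M u = enorm (projM M u - u).
Proof.
move=> M0 cM; have [PM hP] := projM_spec u M0 cM.
rewrite /distM; apply/eqP; rewrite eq_le; apply/andP; split.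
  apply: ge_inf; last by exists (projM M u).
  by exists 0 => _ [v Mv <-]; exact: enorm_ge0.
apply: lb_le_inf; first by exists (enorm (projM M u - u)), (projM M u).
by move=> _ [v Mv <-]; exact: hP.
Qed.

Lemma distM_le {R : realType} {n : nat} {M : set 'rV[R]_n} u w :
  M !=set0 -> compact M -> M w -> distM M u <= enorm (w - u).
Proof.
move=> M0 cM Mw; rewrite distM_eq //; exact: (projM_spec u M0 cM).2.
Qed.

Lemma distM_in {R : realType} {n : nat} {M : set 'rV[R]_n} u :
  M !=set0 -> compact M -> M u -> distM M u = 0.
Proof.
move=> M0 cM Mu; apply/eqP; rewrite eq_le; apply/andP; split.
  by have := distM_le u u M0 cM Mu; rewrite subrr enorm0.
by rewrite distM_eq // enorm_ge0.
Qed.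

Lemma Gamma_distM {R : realType} {n : nat} (M : set 'rV[R]_n) :
  M !=set0 -> compact M -> Gamma (distM M).
Proof.
move=> M0 cM; split=> [x|x y]; first by rewrite distM_eq // enorm_ge0.
have [Px _] := projM_spec x M0 cM; have [Py _] := projM_spec y M0 cM.
have h1 := distM_le x _ M0 cM Py; have h2 := distM_le y _ M0 cM Px.
have e1 := enormD (projM M y - y) (y - x).
have e2 := enormD (projM M x - x) (x - y).
have q1 : projM M y - y + (y - x) = projM M y - x by vec.
have q2 : projM M x - x + (x - y) = projM M x - y by vec.
rewrite q1 in e1; rewrite q2 in e2.
rewrite -(distM_eq y M0 cM) in e1; rewrite -(distM_eq x M0 cM) in e2.
rewrite (enormB y x) in e1.
rewrite ler_norml; apply/andP; split; lra.
Qed.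

Lemma projM_cont {R : realType} {n : nat} (M : set 'rV[R]_n) :
  convex_set (M : set (convex_lmodType 'rV[R]_n)) -> M !=set0 -> compact M ->
  continuous (projM M).
Proof.
move=> cvx M0 cM; apply: lip_cont_V => x y.
exact: proj_lip cvx (projM_spec x M0 cM) (projM_spec y M0 cM).
Qed.

Lemma open_pos {R : realType} {n : nat} (g : 'rV[R]_n -> R) :
  continuous g -> open [set x | 0 < g x].
Proof.
move=> cg.
have o : open (`]0, +oo[%classic : set R) by apply: interval_open.
have := proj1 (continuousP g) cg _ o.
congr open; apply/seteqP; split => x /=; rewrite in_itv /= andbT //.
Qed.

Theorem theorem3p1 (R : realType) (n : nat)
  (Ptrue : probability (borelX R n) R)
  (Pk : nat -> probability (borelX R n) R) :
  convex_set (supp Ptrue : set (convex_lmodType 'rV[R]_n)) ->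
  compact (supp Ptrue) ->
  (forall k (A : set (borelX R n)), measurable A ->
     pushforward (Pk k) (projM (supp Ptrue) : borelX R n -> borelX R n) A = Ptrue A) ->
  forall (k : nat) (tau p : R), 0 <= tau -> 1 <= p ->
    (Gamma (distM (supp Ptrue)) /\
     (forall f, Gamma f ->
        (objective Ptrue (Pk k) tau p (distM (supp Ptrue))
         <= objective Ptrue (Pk k) tau p f)%E)) /\
    (0 < tau ->
     (\int[Pk k]_x (enorm x)%:E < +oo)%E ->
     forall fstar, Gamma fstar ->
       (forall f, Gamma f ->
          (objective Ptrue (Pk k) tau p fstar <= objective Ptrue (Pk k) tau p f)%E) ->
       forall u, supp (Pk k) u -> fstar u = distM (supp Ptrue) u).
Proof.
move=> cvx cM hpush k tau p tau0 p1.
set M := supp Ptrue in cvx cM hpush *.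
have M0 : M !=set0.
  apply: contrapT => hM0.
  have hP : forall u, projM M u = 0.
    by move=> u; apply: xgetPN => v [Mv _]; apply: hM0; exists v.
  apply: hM0; exists 0; rewrite /M /supp /= => U oU U0.
  rewrite -(hpush k U (@open_meas R n U oU)) /pushforward.
  have -> : (projM (supp Ptrue) : borelX R n -> borelX R n) @^-1` U = setT.
    by apply/seteqP; split => // x _ /=; rewrite hP.
  by rewrite probability_setT lte01.
have PM : forall u, M (projM M u) := fun u => (projM_spec u M0 cM).1.
have mP : measurable_fun setT (projM M : borelX R n -> borelX R n).
  exact: cont_meas_V (projM_cont M cvx M0 cM).
have tr := transfer Ptrue (Pk k) _ mP (hpush k).
set d := distM M.
have Gd : Gamma d := Gamma_distM M M0 cM.
have cd : continuous d := lip_cont_R _ Gd.2.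
have d_in : forall u, d (projM M u) = 0 := fun u => distM_in _ M0 cM (PM u).
have p0 : p != 0 by rewrite gt_eqF // (lt_le_trans ltr01 p1).
have mJ : forall g : 'rV[R]_n -> R, continuous g ->
    measurable_fun setT (fun x : borelX R n => (tau * g x `^ p)%:E).
  move=> g cg; apply/measurable_EFinP; apply: measurable_funM.
    exact: measurable_cst.
  exact: measurableT_comp (measurable_powR p) (cont_meas_R cg).
have mJf : forall g : 'rV[R]_n -> R, continuous g ->
    measurable_fun setT (fun x : borelX R n => (g x + tau * g x `^ p)%:E).
  move=> g cg; apply/measurable_EFinP; apply: measurable_funD.
    exact: cont_meas_R cg.
  apply/measurable_EFinP; exact: mJ.
have mfP : forall g : 'rV[R]_n -> R, continuous g ->
    measurable_fun setT (fun x : borelX R n => (g (projM M x))%:E).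
  move=> g cg; apply/measurable_EFinP; exact: measurableT_comp (cont_meas_R cg) mP.
have hJd : (\int[Ptrue]_x (d x + tau * d x `^ p)%:E = 0)%E.
  rewrite tr; last 2 first.
  - exact: mJf.
  - by move=> x; rewrite lee_fin addr_ge0 ?mulr_ge0 ?powR_ge0 ?Gd.1.
  rewrite -(integral0 (Pk k) setT); apply: eq_integral => x _.
  by rewrite /= d_in powR0 // mulr0 addr0.
pose Bf (f : 'rV[R]_n -> R) := (\int[Ptrue]_x (f x)%:E)%E.
pose Ff (f : 'rV[R]_n -> R) := (\int[Pk k]_x (f x)%:E)%E.
pose Af (f : 'rV[R]_n -> R) := (\int[Ptrue]_x (tau * f x `^ p)%:E)%E.
pose D := Ff d.
have D0 : (0 <= D)%E by apply: integral_ge0 => x _; rewrite lee_fin Gd.1.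
have base : forall f, Gamma f ->
   [/\ (exists c : R, Bf f <= c%:E), 0 <= Bf f, Ff f <= Bf f + D, 0 <= Af f /\ 0 <= Ff f
     & \int[Ptrue]_x (f x + tau * f x `^ p)%:E = Bf f + Af f]%E.
  move=> f Gf; have cf : continuous f := lip_cont_R _ Gf.2.
  have f0 : forall x, (0 <= (f x)%:E)%E by move=> x; rewrite lee_fin Gf.1.
  have hB : Bf f = (\int[Pk k]_x (f (projM M x))%:E)%E.
    by rewrite /Bf tr //; exact: cont_meas_E.
  split.
  - have [c Mc hc] := EVT_max_rV M0 cM (@continuous_subspaceT _ _ M _ cf).
    exists (f c); rewrite hB.
    apply: (@le_trans _ _ (\int[Pk k]_x (cst (f c)%:E x))%E).
      apply: ge0_le_integral => //; first exact: mfP.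
      by move=> x _; rewrite lee_fin /=; apply: hc; rewrite inE.
    rewrite integral_cst // -[X in (_ <= X)%E]mule1; apply: lee_pmul => //.
    exact: probability_le1.
  - by apply: integral_ge0 => x _.
  - rewrite hB /D /Ff.
    have hsum : (\int[Pk k]_x (f (projM M x) + d x)%:E =
        \int[Pk k]_x (f (projM M x))%:E + \int[Pk k]_x (d x)%:E)%E.
      under eq_integral do rewrite EFinD.
      apply: ge0_integralD => //; first exact: mfP.
        by move=> x _; rewrite lee_fin Gd.1.
      exact: cont_meas_E.
    rewrite -hsum; apply: ge0_le_integral => //.
    + exact: cont_meas_E.
    + apply/measurable_EFinP; apply: measurable_funD.
        exact: measurableT_comp (cont_meas_R cf) mP.
      exact: cont_meas_R.
    + move=> x _; rewrite lee_fin.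
      have := Gf.2 x (projM M x); rewrite /d (distM_eq x M0 cM) enormB.
      rewrite ler_norml => /andP[_ h]; lra.
  - split; first by apply: integral_ge0 => x _; rewrite lee_fin mulr_ge0 ?powR_ge0.
    by apply: integral_ge0 => x _.
  - under eq_integral do rewrite EFinD.
    apply: ge0_integralD => //; first exact: cont_meas_E.
      by move=> x _; rewrite lee_fin mulr_ge0 ?powR_ge0.
    exact: mJ.
have objd : objective Ptrue (Pk k) tau p d = (0 - D)%E by rewrite /objective hJd.
split.
  split=> // f Gf.
  have [[c hc] B0 hF [A0 F0] hsplit] := base f Gf.
  rewrite objd /objective hsplit.
  rewrite -/(Ff f); have := arith1 B0 hc D0 F0 hF (leeDl _ A0). exact.
move=> taupos hmom fs Gfs hopt u hu.
have cfs : continuous fs := lip_cont_R _ Gfs.2.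
have [m0 Mm0] := M0.
have hD : (D < +oo)%E.
  apply: (@le_lt_trans _ _ (\int[Pk k]_x (enorm x + enorm m0)%:E)%E).
    apply: ge0_le_integral => //.
    - by move=> x _; rewrite lee_fin Gd.1.
    - exact: cont_meas_E.
    - apply/measurable_EFinP; apply: measurable_funD; last exact: measurable_cst.
      apply: cont_meas_R; apply: lip_cont_R => x y; exact: enorm_lip.
    - move=> x _; rewrite lee_fin.
      apply: (le_trans (distM_le x m0 M0 cM Mm0)).
      by rewrite addrC -(enormN x); apply: enormD.
  under eq_integral do rewrite EFinD.
  rewrite ge0_integralD //.
  - rewrite integral_cst //; apply: lte_add_pinfty => //.
    apply: (@le_lt_trans _ _ (enorm m0)%:E); last exact: ltry.
    rewrite -[X in (_ <= X)%E]mule1; apply: lee_pmul => //.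
      by rewrite lee_fin enorm_ge0.
    exact: probability_le1.
  - by move=> x _; rewrite lee_fin enorm_ge0.
  - apply: cont_meas_E; apply: lip_cont_R => x y; exact: enorm_lip.
  - by move=> x _; rewrite lee_fin enorm_ge0.
have [[c hc] B0 hF [A0 F0] hsplit] := base fs Gfs.
have hopt' := hopt d Gd.
rewrite objd /objective hsplit -/(Ff fs) in hopt'.
have hA0 : Af fs = 0%E := arith2 B0 hc D0 hD F0 hF A0 hopt'.
have hfM : forall x, M x -> fs x = 0.
  move=> x Mx; apply/eqP; rewrite eq_le Gfs.1 andbT leNgt; apply/negP => fx0.
  have hU : Ptrue [set y | 0 < fs y] = 0%E.
    apply: (@null_open R n Ptrue (fun x : borelX R n => (tau * fs x `^ p)%:E) [set y | 0 < fs y]) => //.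
    - exact: mJ.
    - by move=> y; rewrite lee_fin mulr_ge0 ?powR_ge0.
    - exact: open_pos.
    - by move=> y /= fy; rewrite lte_fin mulr_gt0 // powR_gt0.
  have := Mx _ (open_pos _ cfs) fx0; rewrite hU ltxx //.
have hfd : forall x, fs x <= d x.
  move=> x; have := Gfs.2 x (projM M x); rewrite (hfM _ (PM x)) subr0 /d (distM_eq x M0 cM) enormB.
  by move/(le_trans (ler_norm _)).
have hB0 : Bf fs = 0%E.
  have e : Bf fs = (\int[Pk k]_x (fs (projM M x))%:E)%E.
    rewrite /Bf tr //; last by move=> x; rewrite lee_fin Gfs.1.
    exact: cont_meas_E.
  rewrite e.
  rewrite -(integral0 (Pk k) setT); apply: eq_integral => x _.
  by rewrite /= (hfM _ (PM x)).
have hFD : (Ff fs <= D)%E.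
  apply: ge0_le_integral => //.
  all: try (by move=> x _; rewrite lee_fin ?Gfs.1 ?hfd).
  exact: (cont_meas_E cfs). exact: (cont_meas_E cd).
have hFeq : Ff fs = D.
  apply: (arith3 (A := Bf fs + Af fs)) => //.
  by rewrite hB0 hA0 adde0.
pose g := fun x => d x - fs x.
have cg : continuous g.
  by move=> x; apply: continuousB; [exact: (cd x)|exact: (cfs x)].
have g0 : forall x, 0 <= g x by move=> x; rewrite /g subr_ge0.
have hG : (\int[Pk k]_x (g x)%:E = 0)%E.
  apply: (arith4 (F := Ff fs)) => //.
  - by apply: integral_ge0 => x _; rewrite lee_fin.
  - by rewrite hFeq.
  rewrite /Ff -ge0_integralD //.
  - rewrite -/(Ff fs) hFeq /D /Ff; apply: eq_integral => x _; rewrite -EFinD /g subrK //.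
  - by move=> x _; rewrite lee_fin.
  - exact: (cont_meas_E cg).
  - by move=> x _; rewrite lee_fin Gfs.1.
  - exact: (cont_meas_E cfs).
have hU : Pk k [set y | 0 < g y] = 0%E.
  apply: (@null_open R n (Pk k) (fun x : borelX R n => (g x)%:E) [set y | 0 < g y]) => //.
  - exact: (cont_meas_E cg).
  - exact: open_pos.
apply/eqP; rewrite eq_le hfd /=.
have : ~ 0 < g u.
  by move=> gu; have := hu _ (open_pos _ cg) gu; rewrite hU ltxx.
by move/negP; rewrite -leNgt /g subr_le0.
Qed.
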